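(* The algebra $\mathcal{A}$ (under pointwise operations) of real-valued continuous functions on $[0,1]$ which are analytic on $(0,1)$ admits a set of free generators of cardinality $\mathfrak{c}$, i.e. there is $Z=\{z_\alpha:\alpha<\mathfrak{c}\}\subset\mathcal{A}$ such that for every polynomial $P$ with real coefficients and no constant term and distinct $z_{\alpha_1},\dots,z_{\alpha_n}\in Z$, $P(z_{\alpha_1},\dots,z_{\alpha_n})=0$ iff $P=0$.
   Context: $\mathfrak{c}$ is the cardinality of the continuum. *)

(* Defs.v *)
From HB Require Import structures.
From mathcomp Require Import all_boot all_order all_algebra.
From mathcomp Require Import mpoly.
From mathcomp Require Import all_classical all_reals all_analysis.
Set Implicit Arguments. Unset Strict Implicit. Unset Printing Implicit Defensive.
Import Order.TTheory GRing.Theory Num.Theory.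
Import numFieldNormedType.Exports.
Local Open Scope classical_set_scope.
Local Open Scope ring_scope.

Definition analytic_at (R : realType) (f : R -> R) (x0 : R) : Prop :=
  exists (r : R) (a : nat -> R), 0 < r /\
    forall x : R, `|x - x0| < r ->
      ([series a k * (x - x0) ^+ k]_k) @ \oo --> f x.

(* The algebra A: continuous on [0,1], analytic on (0,1).  Functions are
   represented as maps R -> R; only their values on [0,1] matter. *)
Definition in_A (R : realType) (f : R -> R) : Prop :=
  {within `[(0:R), 1], continuous f} /\
  (forall x : R, 0 < x < 1 -> analytic_at f x).

Definition A_eq (R : realType) (f g : R -> R) : Prop :=
  forall x : R, 0 <= x <= 1 -> f x = g x.

Definition mpoly_eval_fun (R : realType) (n : nat)
  (P : {mpoly R[n]}) (z : 'I_n -> R -> R) : R -> R :=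
  fun x => meval (fun i => z i x) P.

(* Main.v *)
Require Import Defs.
From HB Require Import structures.
From mathcomp Require Import all_boot all_order all_algebra.
From mathcomp Require Import mpoly.
From mathcomp Require Import all_classical all_reals all_analysis.
From mathcomp Require Import ring lra zify.
Import Order.TTheory GRing.Theory Num.Theory.
Local Open Scope ring_scope.

Definition w (R : realFieldType) (m : nat) : R := (2:R)^-1 ^+ (m * m).
Arguments w {R}.

Lemma w_gt0 (R : realFieldType) m : 0 < w m :> R.
Proof. by rewrite /w exprn_gt0 // invr_gt0. Qed.

Lemma w_shift (R : realFieldType) q : w q.+1 = w q * (2:R)^-1 ^+ (2*q+1).
Proof. by rewrite /w -exprD; congr (_ ^+ _); lia. Qed.

Lemma two_w (R : realFieldType) m : (2:R) ^+ (m * m) * w m = 1.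
Proof. by rewrite /w -exprMn divff ?expr1n // pnatr_eq0. Qed.

Lemma int_ge1 (z : int) : z != 0 -> 1 <= `|z|.
Proof. by case: z => [[|k]|k]. Qed.

Lemma lacunary (R : realFieldType) (e : nat -> int) (L K : R) (q : nat) :
  (forall p, `|L - \sum_(0 <= m < p) (e m)%:~R * w m| <= K * w p) ->
  e q.+1 != 0 -> K < 2 ^+ (2*q+1) -> L = 0 -> False.
Proof.
move=> Hb Hne HK L0.
have h0 : 0 < (2:R)^-1 by rewrite invr_gt0.
have Kh : K * (2:R)^-1 ^+ (2*q+1) < 1.
  by rewrite exprVn ltr_pdivrMr ?mul1r // exprn_gt0.
have Kh0 : 0 <= K.
  have := Hb 0%N; rewrite big_geq // => H.
  have := le_trans (normr_ge0 _) H; rewrite pmulr_lge0 //; exact: w_gt0.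
set pre := \sum_(0 <= m < q.+1) ((e m)%:~R * w m : R).
have Hpre : `|pre| <= K * w q.+1.
  by have := Hb q.+1; rewrite L0 sub0r normrN.
pose Z : int := \sum_(0 <= m < q.+1) e m * 2 ^+ (q*q - m * m).
have ZE : Z%:~R = (2:R) ^+ (q*q) * pre.
  rewrite /Z rmorph_sum /pre big_distrr; apply: eq_big_nat => m /andP[_ mq] /=.
  rewrite rmorphM rmorphXn /=.
  have -> : (2:R) ^+ (q*q) = 2 ^+ (q*q - m * m) * 2 ^+ (m * m).
    by rewrite -exprD subnK // leq_mul.
  have := two_w R m => tw.
  transitivity ((e m)%:~R * (2:R) ^+ (q*q - m * m) * (2 ^+ (m * m) * w m)).
    by rewrite tw mulr1.
  ring.
have Zlt : `|(Z%:~R : R)| < 1.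
  rewrite ZE normrM ger0_norm ?exprn_ge0 //.
  have step : 2 ^+ (q*q) * `|pre| <= 2 ^+ (q*q) * (K * w q.+1) :> R.
    by rewrite ler_wpM2l // exprn_ge0.
  apply: le_lt_trans step _.
  rewrite w_shift.
  have tw := two_w R q.
  have -> : (2:R) ^+ (q*q) * (K * (w q * (2:R)^-1 ^+ (2*q+1))) =
     K * (2:R)^-1 ^+ (2*q+1) * (2 ^+ (q*q) * w q) by ring.
  by rewrite tw mulr1.
have Z0 : Z = 0.
  apply/eqP; apply: contraTT Zlt => /negP Zn.
  rewrite -leNgt -intr_norm (ler_int R 1).
  by apply: int_ge1; apply/negP.
have pre0 : pre = 0.
  move: ZE; rewrite Z0 /= => /esym/eqP; rewrite mulf_eq0 => /orP[|/eqP //].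
  by rewrite expf_eq0 /= => /andP[_ /eqP]; lra.
have := Hb q.+2; rewrite big_nat_recr //= -/pre pre0 add0r L0 sub0r normrN.
rewrite normrM => H2.
have e1 : 1 <= `|(e q.+1)%:~R : R|.
  rewrite -intr_norm (ler_int R 1).
  exact: int_ge1.
have wq := w_gt0 R q.+1.
have w2 : w q.+2 <= w q.+1 * (2:R)^-1 ^+ (2*q+1) :> R.
  rewrite (w_shift R q.+1); apply: ler_wpM2l; first exact: ltW.
  have -> : (2 * q.+1 + 1 = (2*q+1) + 2)%N by lia.
  rewrite exprD; apply: ler_piMr; first by rewrite exprn_ge0 // ltW.
  rewrite expr2; have : (2:R)^-1 <= 1 by rewrite invf_le1 //; lra.
  move=> h1; apply: mulr_ile1 => //; exact: ltW.
have : w q.+1 <= K * w q.+2 :> R.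
  apply: le_trans H2.
  rewrite (gtr0_norm wq) ler_peMl //; exact: ltW.
move=> H3.
have : K * w q.+2 <= w q.+1 * (K * (2:R)^-1 ^+ (2*q+1)).
  have -> : w q.+1 * (K * (2:R)^-1 ^+ (2*q+1)) = K * (w q.+1 * (2:R)^-1 ^+ (2*q+1)) by ring.
  have HH := ler_wpM2l Kh0 w2.
  exact: HH.
move=> H4.
have := le_trans H3 H4.
rewrite ler_pMr // => H5.
by move: (lt_le_trans Kh H5); rewrite ltxx.
Qed.


Definition enc (k j : nat) : nat := ((k + j) * (k + j) + k)%N.

Lemma enc_inj k j k' j' : enc k j = enc k' j' -> k = k' /\ j = j'.
Proof.
rewrite /enc => E.
have : (k + j = k' + j')%N.
  case: (ltngtP (k + j) (k' + j')) => // H; exfalso; nia.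
lia.
Qed.

Lemma enc_ge k j : (k <= enc k j)%N.
Proof. rewrite /enc; lia. Qed.

Section S.
Variable R : realType.

Definition bb (t : R) (m : nat) : bool :=
  `[< exists k : nat, m = enc k (pickle (Num.floor (2 ^+ k * t))) >].

Definition sigp (t : R) (N : nat) : R := \sum_(0 <= m < N) ((bb t m)%:R * w m).

Definition cc (t : R) : R := sup (range (sigp t)).

Lemma w_ge0 m : 0 <= w m :> R. Proof. exact/ltW/w_gt0. Qed.

Lemma w_S m : 2 * w m.+1 <= w m :> R.
Proof.
rewrite w_shift exprD expr1.
have -> : 2 * (w m * ((2:R)^-1 ^+ (2 * m) * 2^-1)) = w m * (2:R)^-1 ^+ (2 * m).
  by field.
apply: ler_piMr; first exact: w_ge0.
apply: exprn_ile1; first by rewrite invr_ge0.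
by rewrite invf_le1 //; lra.
Qed.

Lemma tail_sum a k : \sum_(0 <= i < k) w (a + i) + 2 * w (a + k) <= 2 * w a :> R.
Proof.
elim: k => [|k IH]; first by rewrite big_geq // add0r addn0.
rewrite big_nat_recr //= -addrA; apply: le_trans IH; rewrite lerD2l.
have := w_S (a + k); rewrite addnS; lra.
Qed.

Lemma sig_mono t p N : (p <= N)%N -> sigp t p <= sigp t N.
Proof.
move=> pN; rewrite /sigp (big_cat_nat (leq0n p) pN) /= lerDl.
apply: sumr_ge0 => m _; apply: mulr_ge0; [by case: (bb t m) | exact: w_ge0].
Qed.

Lemma sig_tail t p N : (p <= N)%N -> sigp t N - sigp t p <= 2 * w p.
Proof.
move=> pN; rewrite /sigp (big_cat_nat (leq0n p) pN) /= addrAC subrr add0r.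
apply: (@le_trans _ _ (\sum_(p <= m < N) w m)).
  apply: ler_sum => m _; case: (bb t m); rewrite ?mul1r ?mul0r //; exact: w_ge0.
rewrite -{1}(add0n p) big_addn.
have := tail_sum p (N - p).
have -> : \sum_(0 <= i < N - p) w (i + p) = \sum_(0 <= i < N - p) w (p + i) :> R.
  by apply: eq_bigr => i _; rewrite addnC.
have := w_ge0 (p + (N - p)); lra.
Qed.

Lemma sig_ub t N : sigp t N <= 2.
Proof.
have := @sig_tail t 0 N (leq0n N).
have -> : sigp t 0 = 0 by rewrite /sigp big_geq.
by rewrite subr0 /w mul0n expr0 mulr1.
Qed.

Lemma cc_bounds t p : sigp t p <= cc t <= sigp t p + 2 * w p.
Proof.
have hub : has_ubound (range (sigp t)) by exists 2 => _ [N _ <-]; exact: sig_ub.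
apply/andP; split.
  by apply: ub_le_sup => //; exists p.
apply: ge_sup; first by exists (sigp t 0), 0%N.
move=> _ [N _ <-].
case: (leqP N p) => Np.
  have := @sig_mono t _ _ Np; have := w_ge0 p; lra.
have := @sig_tail t _ _ (ltnW Np); lra.
Qed.

End S.
Arguments bb {R}. Arguments sigp {R}. Arguments cc {R}.


Section S.
Variable R : realType.

Definition ee n (alpha : 'I_n -> R) (d : 'I_n -> int) (m : nat) : int :=
  \sum_i d i * (bb (alpha i) m)%:Z.
Definition DD n (d : 'I_n -> int) : nat := (\sum_i `|d i|)%N.
Arguments ee {n}. Arguments DD {n}.

Lemma comb_bound n (alpha : 'I_n -> R) d p :
  `| \sum_i (d i)%:~R * cc (alpha i) - \sum_(0 <= m < p) ((ee alpha d m)%:~R * w m) |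
    <= (2 * DD d)%:R * w p.
Proof.
have E : \sum_(0 <= m < p) ((ee alpha d m)%:~R * w m) = \sum_i (d i)%:~R * sigp (alpha i) p.
  rewrite /sigp.
  under eq_bigr => m _ do rewrite /ee rmorph_sum mulr_suml.
  rewrite exchange_big /=; apply: eq_bigr => i _; rewrite big_distrr /=.
  by apply: eq_bigr => m _; rewrite rmorphM /= mulrA.
rewrite E -sumrB.
apply: le_trans (ler_norm_sum _ _ _) _.
have -> : (2 * DD d)%:R * w p = \sum_i `|d i|%:R * (2 * w p) :> R.
  by rewrite /DD natrM natr_sum mulr_sumr mulr_suml; apply: eq_bigr => i _; ring.
apply: ler_sum => i _.
rewrite -mulrBr normrM natr_absz intr_norm; apply: ler_wpM2l; first exact: normr_ge0.
have /andP[h1 h2] := cc_bounds _ (alpha i) p.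
rewrite ger0_norm; lra.
Qed.

Lemma floor_sep (a b : R) k : 1 <= 2 ^+ k * `|a - b| ->
  Num.floor (2 ^+ k * a) != Num.floor (2 ^+ k * b).
Proof.
move=> H; apply/negP => /eqP E.
have := floor_itv (2 ^+ k * a); have := floor_itv (2 ^+ k * b); rewrite E.
rewrite intrD => /andP[h1 h2] /andP[h3 h4].
have : `|2 ^+ k * a - 2 ^+ k * b| < 1.
  by rewrite ltr_norml; apply/andP; split; lra.
rewrite -mulrBr normrM ger0_norm ?exprn_ge0 //; lra.
Qed.

Lemma bb_self (t : R) k : bb t (enc k (pickle (Num.floor (2 ^+ k * t)))).
Proof. by apply/asboolP; exists k. Qed.

Lemma bb_other (t s : R) k : 1 <= 2 ^+ k * `|t - s| ->
  bb s (enc k (pickle (Num.floor (2 ^+ k * t)))) = false.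
Proof.
move=> H; apply/asboolP => -[k' /enc_inj [kk' /(pcan_inj pickleK) fe]].
subst k'; by move: (floor_sep _ _ _ H) => /eqP.
Qed.

Lemma exists_k n (alpha : 'I_n -> R) (i0 : 'I_n) (D : nat) : injective alpha ->
  exists k, (D < k)%N /\ forall j, j != i0 -> 1 <= 2 ^+ k * `|alpha i0 - alpha j|.
Proof.
move=> ainj.
have H : forall j : 'I_n, exists K : nat, forall k, (K <= k)%N ->
    j != i0 -> 1 <= 2 ^+ k * `|alpha i0 - alpha j|.
  move=> j; case: (eqVneq j i0) => [-> | ji]; first by exists 0%N => k _ /negP.
  have dpos : 0 < `|alpha i0 - alpha j|.
    rewrite normr_gt0 subr_eq0; apply/eqP => /ainj E; by move: ji; rewrite E eqxx.
  set dl := `|alpha i0 - alpha j| in dpos *.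
  exists (Num.Def.archi_bound dl^-1) => k Kk _.
  have dinv : 0 <= dl^-1 by rewrite invr_ge0 ltW.
  have h1 := archi_boundP dinv.
  have h2 : (Num.Def.archi_bound dl^-1)%:R <= k%:R :> R by rewrite ler_nat.
  have h3 : k%:R < 2 ^+ k :> R by rewrite -natrX ltr_nat ltn_expl.
  have h4 : dl^-1 < 2 ^+ k by apply: lt_trans h3; exact: lt_le_trans h1 h2.
  rewrite -[dl^-1]mul1r ltr_pdivrMr // in h4; exact: ltW.
have [K HK] := fin_all_exists H.
exists ((\max_j K j) + D).+1; split; first lia.
move=> j ji; apply: HK => //.
have := @leq_bigmax _ K j; lia.
Qed.

Lemma indep n (alpha : 'I_n -> R) (d : 'I_n -> int) : injective alpha ->
  \sum_i (d i)%:~R * cc (alpha i) = 0 -> forall i, d i = 0.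
Proof.
move=> ainj H0 i0; case: (eqVneq (d i0) 0) => // dn; exfalso.
have [k [Dk Hk]] := @exists_k _ alpha i0 (DD d) ainj.
set m0 := enc k (pickle (Num.floor (2 ^+ k * alpha i0))).
have e0 : ee alpha d m0 = d i0.
  rewrite /ee (bigD1 i0) //= bb_self mulr1 big1 ?addr0 // => j ji.
  by rewrite bb_other ?mulr0 //; exact: Hk.
have m0k : (k <= m0)%N by apply: enc_ge.
have mq : m0 = m0.-1.+1 by rewrite prednK //; lia.
apply: (@lacunary R (ee alpha d) (\sum_i (d i)%:~R * cc (alpha i)) ((2 * DD d)%:R) m0.-1).
- by move=> p; exact: comb_bound.
- by rewrite -mq e0.
- rewrite -natrX ltr_nat.
  have := ltn_expl (2 * m0.-1 + 1) (isT : (1 < 2)%N); lia.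
- exact: H0.
Qed.

End S.

Section A1sec.
Import numFieldNormedType.Exports.
Local Open Scope classical_set_scope.

Lemma expfun_in_A (R : realType) (c : R) : in_A (fun x => expR (c * x)).
Proof.
split.
  apply: continuous_subspaceT => x.
  apply: continuous_comp; last exact: continuous_expR.
  exact: mulrl_continuous.
move=> x0 _; exists 1, (fun k => expR (c * x0) * (k`!%:R^-1 * c ^+ k)); split => //.
move=> x _.
have -> : expR (c * x) = expR (c * x0) * expR (c * (x - x0)).
  by rewrite -expRD mulrBr addrC subrK.
have E : (fun n => series (fun k => expR (c * x0) * (k`!%:R^-1 * c ^+ k) * (x - x0) ^+ k) n)
   = (fun n => expR (c * x0) * series (exp_coeff (c * (x - x0))) n).
  apply: funext => n; rewrite /series /= big_distrr /=; apply: eq_bigr => k _.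
  by rewrite exp_coeffE /= exprMn !mulrA.
move=> /=; rewrite [X in X @ \oo]E; apply: cvgMl_tmp.
exact: is_cvg_series_exp_coeff.
Qed.

End A1sec.


Lemma vdm_zero (R : fieldType) (T : eqType) (s : seq T) (f a : T -> R) :
  uniq s -> {in s &, injective f} ->
  (forall j, (j < size s)%N -> \sum_(t <- s) a t * f t ^+ j = 0) ->
  forall t, t \in s -> a t = 0.
Proof.
elim: s a => [|t0 s IH] a //= /andP[t0s us] Hinj H.
have Hs : forall t, t \in s -> a t = 0.
  have := IH (fun t => a t * (f t - f t0)) us.
  have Hinj' : {in s &, injective f}.
    by move=> x y xs ys; apply: Hinj; rewrite inE ?xs ?ys orbT.
  move=> /(_ Hinj') H'.
  move=> t ts.
  have : a t * (f t - f t0) = 0.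
    apply: H' => // j js.
    have H1 := H j.+1 js.
    have H0 := H j (ltnW js).
    rewrite big_cons in H1; rewrite big_cons in H0.
    have -> : \sum_(t1 <- s) a t1 * (f t1 - f t0) * f t1 ^+ j =
       \sum_(t1 <- s) a t1 * f t1 ^+ j.+1 - f t0 * \sum_(t1 <- s) a t1 * f t1 ^+ j.
      rewrite big_distrr /= -sumrB; apply: eq_bigr => i _; rewrite exprS; ring.
    have E1 : \sum_(t1 <- s) a t1 * f t1 ^+ j.+1 = - (a t0 * f t0 ^+ j.+1).
      by apply/eqP; rewrite -addr_eq0 addrC H1.
    have E0 : \sum_(t1 <- s) a t1 * f t1 ^+ j = - (a t0 * f t0 ^+ j).
      by apply/eqP; rewrite -addr_eq0 addrC H0.
    rewrite E1 E0 exprS; ring.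
  move/eqP; rewrite mulf_eq0 => /orP[/eqP //|].
  rewrite subr_eq0 => /eqP ff.
  have : t = t0.
    by apply: Hinj => //; rewrite inE ?ts ?eqxx ?orbT.
  by move=> tt; move: t0s; rewrite -tt ts.
move=> t; rewrite inE => /orP[/eqP ->|]; last exact: Hs.
have := H 0%N isT; rewrite big_cons !expr0 !mulr1 big_seq big1 ?addr0 //.
by move=> i iS; rewrite Hs // mul0r.
Qed.


Lemma cc_inj (R : realType) : injective (@cc R).
Proof.
move=> a b E; apply: contrapT => ab.
pose alpha : 'I_2 -> R := fun i => if i == ord0 then a else b.
have ainj : injective alpha.
  move=> i j; rewrite /alpha.
  case: (eqVneq i ord0) => [->|i0]; case: (eqVneq j ord0) => [->|j0] // E'.
  - by exfalso; apply: ab.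
  - by apply: val_inj; move: i0 j0; case: i => [[|[|i]] ?]; case: j => [[|[|j]] ?].
pose d : 'I_2 -> int := fun i => if i == ord0 then 1 else -1.
have := @indep R 2 alpha d ainj.
rewrite big_ord_recl big_ord1 /alpha /d /=.
rewrite E.
have h : (1%:~R * cc b + (-1)%:~R * cc b) = 0 :> R by rewrite mulNr mul1r subrr.
by move=> /(_ h ord0).
Qed.

Theorem mainTheorem8 (R : realType) :
  exists z : R -> (R -> R),
    injective z /\
    (forall a : R, in_A (z a)) /\
    (forall (n : nat) (alpha : 'I_n -> R) (P : {mpoly R[n]}),
        injective alpha ->
        P@_(0%MM) = 0 ->
        (A_eq (mpoly_eval_fun P (fun i => z (alpha i))) (fun _ => 0)
         <-> P = 0)).
Proof.
exists (fun a x => expR (cc a * x)); split; [|split].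
- move=> a b E; apply: cc_inj; apply: expR_inj.
  by have := congr1 (fun f => f 1) E; rewrite /= !mulr1.
- by move=> a; exact: expfun_in_A.
move=> n alpha P ainj _; split; last first.
  by move=> -> x _; rewrite /mpoly_eval_fun meval0.
move=> H.
pose lam (m : 'X_{1.. n}) : R := \sum_i (m i)%:R * cc (alpha i).
have Hev : forall x, meval (fun i => expR (cc (alpha i) * x)) P
    = \sum_(m <- msupp P) P@_m * expR (lam m * x).
  move=> x; rewrite mevalE; apply: eq_bigr => m _; congr (_ * _).
  rewrite /lam mulr_suml expR_sum; apply: eq_bigr => i _.
  by rewrite -expRM_natl mulrA.
pose N := size (msupp P).
have lam_inj : {in msupp P &, injective lam}.
  move=> m m' _ _ E.
  have := @indep R n alpha (fun i => (m i)%:Z - (m' i)%:Z) ainj.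
  have h : \sum_i ((m i)%:Z - (m' i)%:Z)%:~R * cc (alpha i) = 0.
    rewrite -[RHS](subrr (lam m)) {2}E /lam -sumrB; apply: eq_bigr => i _.
    by rewrite rmorphB /= mulrBl.
  move=> /(_ h) hi; apply/mnmP => i; have := hi i.
  by move/eqP; rewrite subr_eq0 => /eqP [].
have Hz : forall m, m \in msupp P -> P@_m = 0.
  apply: (@vdm_zero R _ (msupp P) (fun m => expR (lam m / N%:R)) (fun m => P@_m)).
  - exact: msupp_uniq.
  - move=> m m' ms m's /expR_inj E; apply: lam_inj => //.
    have N0 : N%:R != 0 :> R.
      by rewrite pnatr_eq0 /N; move: ms; case: (msupp P).
    by have := congr1 (fun t => t * N%:R) E; rewrite /= !divfK.
  - move=> j jN.
    have N0 : 0 < N%:R :> R by rewrite ltr0n; apply: leq_ltn_trans jN.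
    have hx : ((0:R) <= j%:R / N%:R) && (j%:R / N%:R <= (1:R)).
      apply/andP; split; first by rewrite divr_ge0.
      by rewrite ler_pdivrMr // mul1r ler_nat ltnW.
    have := H _ hx; rewrite /mpoly_eval_fun Hev.
    move=> E0; rewrite -[RHS]E0.
    apply: eq_bigr => m _; congr (_ * _).
    by rewrite -expRM_natl; congr expR; rewrite mulrCA mulrA.
apply/mpolyP => m; rewrite mcoeff0.
case: (boolP (m \in msupp P)) => [/Hz //|].
by rewrite mcoeff_msupp negbK => /eqP.
Qed.
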